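(* Let $\vartheta$ be a primitive semi-compatible random substitution. Then for all $1\leqslant i\leqslant n$, \[ \frac{1}{\lambda}\bm q_1^\intercal\bm R\;\leqslant\;\underline s_i^I\;\leqslant\;\overline s_i^I\;\leqslant\;\frac{1}{\lambda-1}\bm q_1^\intercal\bm R . \] The lower bound is an equality if the identical set condition holds, and the upper bound is an equality if the disjoint set condition holds. Moreover, $\frac{1}{\lambda^r}\bm q_r^\intercal\bm R\leqslant\underline s_i^I$ for every $r\in\mathbb N$, and $r\mapsto\frac{1}{\lambda^r}\bm q_r^\intercal\bm R$ is monotonically non-decreasing.
   Context: Let $\mathcal A=\{a_1,\dots,a_n\}$ be a finite alphabet, $\mathcal A^+$ the finite non-empty words over $\mathcal A$. A random substitution is a map $\vartheta$ from $\mathcal A$ to finite non-empty subsets of $\mathcal A^+$, extended to words by $\vartheta(u_1\cdots u_m)=\{w_1\cdots w_m: w_k\in\vartheta(u_k)\}$ and to sets of words by taking unions; powers $\vartheta^m$ are compositions. $|u|_a$ is the number of occurrences of letter $a$ in $u$, $\Phi(u)=(|u|_{a_1},\dots,|u|_{a_n})^\intercal$. $\vartheta$ is semi-compatible if for each $a$ all words in $\vartheta(a)$ have the same $\Phi$; then all words in $\vartheta^m(a_i)$ have a common length $\ell_{m,i}$. The substitution matrix is $M_{ij}=|u|_{a_i}$, $u\in\vartheta(a_j)$; $\vartheta$ is primitive if $M$ is a primitive matrix, $\lambda$ denotes its Perron–Frobenius eigenvalue and $\bm R,\bm L$ its right and left PF eigenvectors normalised by $\|\bm R\|_1=1=\bm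 L^\intercal\bm R$. Set $q_{m,i}=\log(\#\vartheta^m(a_i))$, $\bm q_m=(q_{m,1},\dots,q_{m,n})^\intercal$. The lower and upper inflation word entropies of type $i$ are $\underline s_i^I=\liminf_{m\to\infty} q_{m,i}/\ell_{m,i}$ and $\overline s_i^I=\limsup_{m\to\infty}q_{m,i}/\ell_{m,i}$. Identical set condition: for all $i$, $m\in\mathbb N$, $u,v\in\vartheta(a_i)$: $\vartheta^m(u)=\vartheta^m(v)$. Disjoint set condition: for all $i$, $m\in\mathbb N$, $u\neq v\in\vartheta(a_i)$: $\vartheta^m(u)\cap\vartheta^m(v)=\varnothing$. *)

(* Defs.v *)
From Stdlib Require Import Reals Lra Lia Arith List.
Import ListNotations.
Open Scope R_scope.

(* Alphabet A = {0, ..., n-1} (letter a_i is the natural number i-1).  A random substitution is given by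
   th : nat -> list (list nat), th a being (a list enumerating) the finite
   set theta(a); duplicates in the list are irrelevant (sets are compared
   by membership, cardinalities are taken after removing duplicates). *)

Definition word := list nat.
Definition rsubst := nat -> list word.

Definition valid_rsubst (n : nat) (th : rsubst) : Prop :=
  forall a, (a < n)%nat ->
    th a <> [] /\
    forall u, In u (th a) -> u <> [] /\ forall b, In b u -> (b < n)%nat.

(* theta extended to words: {w_1 ... w_m : w_k in theta(u_k)} *)
Definition subst_word (th : rsubst) (u : word) : list word :=
  fold_right (fun a acc => flat_map (fun w => map (fun v => w ++ v) acc) (th a))
             [[]] u.

Definition subst_set (th : rsubst) (S : list word) : list word :=
  flat_map (subst_word th) S.

Definition subst_pow (th : rsubst) (m : nat) (u : word) : list word :=
  Nat.iter m (subst_set th) [u].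

Definition occ (u : word) (b : nat) : nat := count_occ Nat.eq_dec u b.

Definition semi_compatible (n : nat) (th : rsubst) : Prop :=
  forall a, (a < n)%nat -> forall u v, In u (th a) -> In v (th a) ->
    forall b, (b < n)%nat -> occ u b = occ v b.

Definition subst_mat (th : rsubst) (i j : nat) : nat := occ (hd [] (th j)) i.

Fixpoint nsum (n : nat) (f : nat -> nat) : nat :=
  match n with O => O | S k => (nsum k f + f k)%nat end.

Fixpoint rsum (n : nat) (f : nat -> R) : R :=
  match n with O => 0 | S k => rsum k f + f k end.

Fixpoint mat_pow (n : nat) (M : nat -> nat -> nat) (k : nat) (i j : nat) : nat :=
  match k with
  | O => if Nat.eqb i j then 1%nat else 0%nat
  | S k' => nsum n (fun l => M i l * mat_pow n M k' l j)%nat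
  end.

Definition primitive_mat (n : nat) (M : nat -> nat -> nat) : Prop :=
  exists k, forall i j, (i < n)%nat -> (j < n)%nat -> (0 < mat_pow n M k i j)%nat.

(* lam is the Perron-Frobenius eigenvalue of M and Rv the right PF eigenvector
   normalised by ||Rv||_1 = 1: Rv is a strictly positive right eigenvector
   with eigenvalue lam (for a primitive matrix this determines exactly the
   PF eigenvalue and the PF eigenvector up to scaling). *)
Definition PF_right (n : nat) (M : nat -> nat -> nat) (lam : R) (Rv : nat -> R) : Prop :=
  (forall i, (i < n)%nat -> 0 < Rv i) /\
  rsum n Rv = 1 /\
  forall i, (i < n)%nat -> rsum n (fun j => INR (M i j) * Rv j) = lam * Rv i.

Definition card_pow (th : rsubst) (m i : nat) : nat :=
  length (nodup (list_eq_dec Nat.eq_dec) (subst_pow th m [i])).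

Definition q (th : rsubst) (m i : nat) : R := ln (INR (card_pow th m i)).

(* l_{m,i}: common length of the words in theta^m(a_i) *)
Definition ell (th : rsubst) (m i : nat) : R := INR (length (hd [] (subst_pow th m [i]))).

Definition qR (n : nat) (th : rsubst) (Rv : nat -> R) (r : nat) : R :=
  rsum n (fun i => q th r i * Rv i).

Definition is_liminf (u : nat -> R) (l : R) : Prop :=
  forall eps, 0 < eps ->
    (exists N, forall m, (N <= m)%nat -> l - eps < u m) /\
    (forall N, exists m, (N <= m)%nat /\ u m < l + eps).

Definition is_limsup (u : nat -> R) (l : R) : Prop :=
  forall eps, 0 < eps ->
    (exists N, forall m, (N <= m)%nat -> u m < l + eps) /\
    (forall N, exists m, (N <= m)%nat /\ l - eps < u m).

Definition identical_set_cond (n : nat) (th : rsubst) : Prop :=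
  forall i, (i < n)%nat -> forall m, (1 <= m)%nat -> forall u v,
    In u (th i) -> In v (th i) ->
    forall w, In w (subst_pow th m u) <-> In w (subst_pow th m v).

Definition disjoint_set_cond (n : nat) (th : rsubst) : Prop :=
  forall i, (i < n)%nat -> forall m, (1 <= m)%nat -> forall u v,
    In u (th i) -> In v (th i) -> u <> v ->
    forall w, ~ (In w (subst_pow th m u) /\ In w (subst_pow th m v)).

(* Main.v *)
Require Import Defs.
From Stdlib Require Import Reals Lra Lia List Arith FunctionalExtensionality Classical.
From Coquelicot Require Import Rcomplements Rbar Lim_seq.
Import ListNotations.
Open Scope R_scope.

Definition wdec := list_eq_dec Nat.eq_dec.
Definition card (l : list word) : nat := length (nodup wdec l).

Lemma card_incl l1 l2 : incl l1 l2 -> (card l1 <= card l2)%nat.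
Proof. intro H. unfold card. apply NoDup_incl_length. apply NoDup_nodup.
  intros x Hx. apply nodup_In. apply H. apply (nodup_In wdec). exact Hx. Qed.

Lemma card_ext l1 l2 : (forall x, In x l1 <-> In x l2) -> card l1 = card l2.
Proof. intro H. apply Nat.le_antisymm; apply card_incl; intros x Hx; apply H; exact Hx. Qed.

Lemma card_nodup l : NoDup l -> card l = length l.
Proof. intro H. unfold card. rewrite nodup_fixed_point; auto. Qed.

Lemma card_le_length l : (card l <= length l)%nat.
Proof. unfold card. apply NoDup_incl_length. apply NoDup_nodup.
  intros x Hx. apply (nodup_In wdec). exact Hx. Qed.

Lemma card_nodup_ext l : card l = card (nodup wdec l).
Proof. apply card_ext. intro x. rewrite nodup_In. tauto. Qed.

Lemma card_app_le l1 l2 : (card (l1 ++ l2) <= card l1 + card l2)%nat.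
Proof.
  rewrite (card_ext (l1 ++ l2) (nodup wdec l1 ++ nodup wdec l2)).
  - eapply Nat.le_trans. apply card_le_length. rewrite length_app. unfold card; lia.
  - intro x. rewrite !in_app_iff, !nodup_In. tauto.
Qed.

Lemma card_app_disj l1 l2 : (forall x, In x l1 -> ~ In x l2) ->
  card (l1 ++ l2) = (card l1 + card l2)%nat.
Proof.
  intro H.
  rewrite (card_ext (l1 ++ l2) (nodup wdec l1 ++ nodup wdec l2)).
  - rewrite card_nodup. rewrite length_app. reflexivity.
    apply NoDup_app; try apply NoDup_nodup.
    intros a Ha Hb. rewrite nodup_In in Ha, Hb. apply (H a); auto.
  - intro x. rewrite !in_app_iff, !nodup_In. tauto.
Qed.

Lemma card_pos l : l <> [] -> (1 <= card l)%nat.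
Proof.
  intro H. destruct l as [|w l]. congruence.
  assert (In w (nodup wdec (w :: l))) by (apply nodup_In; left; auto).
  unfold card. destruct (nodup wdec (w :: l)). inversion H0. simpl; lia.
Qed.

Lemma app_same_len (a b c d : word) : length a = length c -> a ++ b = c ++ d -> a = c.
Proof.
  intros Hl He. apply app_eq_app in He. destruct He as [l [[H1 H2]|[H1 H2]]].
  - subst. rewrite length_app in Hl. destruct l. now rewrite app_nil_r. simpl in Hl; lia.
  - subst. rewrite length_app in Hl. destruct l. now rewrite app_nil_r. simpl in Hl; lia.
Qed.

Definition prodl (d1 d2 : list word) : list word :=
  flat_map (fun w1 => map (fun w2 => w1 ++ w2) d2) d1.

Lemma prodl_nodup d1 d2 L : NoDup d1 -> NoDup d2 -> (forall w, In w d1 -> length w = L) ->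
  NoDup (prodl d1 d2).
Proof.
  induction d1 as [|a d1 IH]; intros H1 H2 HL; simpl. constructor.
  inversion H1; subst.
  apply NoDup_app.
  - apply NoDup_map_NoDup_ForallPairs; auto. intros x y _ _ E. eapply app_inv_head; eauto.
  - apply IH; auto. intros; apply HL; right; auto.
  - intros x Hx Hy. apply in_map_iff in Hx. destruct Hx as [w2 [E _]].
    apply in_flat_map in Hy. destruct Hy as [w1 [Hw1 Hy]].
    apply in_map_iff in Hy. destruct Hy as [w2' [E' _]]. subst.
    assert (a = w1). { eapply app_same_len. 2: symmetry; exact E'.
      rewrite (HL a), (HL w1); auto; [right|left]; auto. }
    subst; contradiction.
Qed.

Lemma prodl_length d1 d2 : length (prodl d1 d2) = (length d1 * length d2)%nat.
Proof. induction d1; simpl. auto. rewrite length_app, length_map. unfold prodl, word in *. lia. Qed.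

Lemma prodl_In d1 d2 w : In w (prodl d1 d2) <-> exists w1 w2, In w1 d1 /\ In w2 d2 /\ w = w1 ++ w2.
Proof.
  unfold prodl. rewrite in_flat_map. split.
  - intros [w1 [H1 H2]]. apply in_map_iff in H2. destruct H2 as [w2 [E H2]]. eauto.
  - intros [w1 [w2 [H1 [H2 E]]]]. exists w1. split; auto. apply in_map_iff. eauto.
Qed.

Lemma card_prod l1 l2 L l : (forall w, In w l1 -> length w = L) ->
  (forall w, In w l <-> exists w1 w2, In w1 l1 /\ In w2 l2 /\ w = w1 ++ w2) ->
  card l = (card l1 * card l2)%nat.
Proof.
  intros HL Hl.
  rewrite (card_ext l (prodl (nodup wdec l1) (nodup wdec l2))).
  - rewrite card_nodup. rewrite prodl_length. reflexivity.
    apply prodl_nodup with L; try apply NoDup_nodup.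
    intros w Hw. apply HL. apply (nodup_In wdec). auto.
  - intro x. rewrite Hl, prodl_In. split; intros [w1 [w2 [A [B C]]]]; exists w1, w2;
    rewrite ?nodup_In in *; auto.
Qed.

Lemma rsum_ext n f g : (forall i, (i < n)%nat -> f i = g i) -> rsum n f = rsum n g.
Proof. induction n; intro H; simpl; auto. rewrite IHn, H; auto. Qed.

Lemma rsum_plus n f g : rsum n (fun i => f i + g i) = rsum n f + rsum n g.
Proof. induction n; simpl. lra. rewrite IHn. lra. Qed.

Lemma rsum_scal n c f : rsum n (fun i => c * f i) = c * rsum n f.
Proof. induction n; simpl. lra. rewrite IHn. lra. Qed.

Lemma rsum_minus n f g : rsum n (fun i => f i - g i) = rsum n f - rsum n g.
Proof. induction n; simpl. lra. rewrite IHn. lra. Qed.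

Lemma rsum_zero n : rsum n (fun _ => 0) = 0.
Proof. induction n; simpl; lra. Qed.

Lemma rsum_le n f g : (forall i, (i < n)%nat -> f i <= g i) -> rsum n f <= rsum n g.
Proof. induction n; intro H; simpl. lra. assert (f n <= g n) by auto.
  assert (rsum n f <= rsum n g) by auto. lra. Qed.

Lemma rsum_nonneg n f : (forall i, (i < n)%nat -> 0 <= f i) -> 0 <= rsum n f.
Proof. intro H. rewrite <- (rsum_zero n). apply rsum_le. auto. Qed.

Lemma rsum_ge_term n f j : (forall i, (i < n)%nat -> 0 <= f i) -> (j < n)%nat -> f j <= rsum n f.
Proof. induction n; intros H Hj. lia. simpl.
  destruct (Nat.eq_dec j n). subst. assert (0 <= rsum n f) by (apply rsum_nonneg; auto). lra.
  assert (f j <= rsum n f) by (apply IHn; auto; lia). assert (0 <= f n) by auto. lra. Qed.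

Lemma rsum_pos n f : (0 < n)%nat -> (forall i, (i < n)%nat -> 0 < f i) -> 0 < rsum n f.
Proof. intros Hn H. assert (0 < f 0%nat) by auto.
  assert (f 0%nat <= rsum n f) by (apply rsum_ge_term; auto; intros; left; auto). lra. Qed.

Lemma rsum_swap n m f : rsum n (fun i => rsum m (fun j => f i j)) = rsum m (fun j => rsum n (fun i => f i j)).
Proof. induction n; simpl. rewrite rsum_zero; auto. rewrite IHn, <- rsum_plus. reflexivity. Qed.

Lemma rsum_ind n f a : (a < n)%nat -> rsum n (fun c => (if Nat.eq_dec a c then 1 else 0) * f c) = f a.
Proof. induction n; intro H. lia. simpl. destruct (Nat.eq_dec a n).
  - subst. rewrite (rsum_ext _ _ (fun _ => 0)). rewrite rsum_zero. lra.
    intros i Hi. destruct (Nat.eq_dec n i). lia. lra.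
  - rewrite IHn by lia. lra. Qed.

Lemma INR_nsum n f : INR (nsum n f) = rsum n (fun i => INR (f i)).
Proof. induction n; simpl. auto. rewrite plus_INR, IHn. auto. Qed.
Definition over (n : nat) (u : word) : Prop := forall b, In b u -> (b < n)%nat.
Definition lsum (f : nat -> R) (u : word) : R := fold_right (fun a acc => f a + acc) 0 u.

Lemma over_cons n a u : over n (a :: u) <-> (a < n)%nat /\ over n u.
Proof. unfold over; simpl; split. intro H; split; auto. intros [H1 H2] b [E|E]; subst; auto. Qed.

Lemma over_app n u v : over n (u ++ v) <-> over n u /\ over n v.
Proof. unfold over; split. intro H; split; intros; apply H; apply in_app_iff; auto.
  intros [H1 H2] b Hb. apply in_app_iff in Hb; destruct Hb; auto. Qed.

Lemma lsum_occ n f u : over n u -> lsum f u = rsum n (fun c => INR (occ u c) * f c).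
Proof.
  induction u as [|a u IH]; intro H; simpl.
  - rewrite (rsum_ext _ _ (fun _ => 0)). rewrite rsum_zero; auto. intros; simpl; lra.
  - apply over_cons in H. destruct H as [Ha Hu]. rewrite IH by auto.
    unfold occ; simpl.
    rewrite (rsum_ext n (fun c => INR (if Nat.eq_dec a c then S (count_occ Nat.eq_dec u c) else count_occ Nat.eq_dec u c) * f c) (fun c => (if Nat.eq_dec a c then 1 else 0) * f c + INR (count_occ Nat.eq_dec u c) * f c)).
    rewrite rsum_plus, rsum_ind; auto.
    intros c Hc. destruct (Nat.eq_dec a c). rewrite S_INR. lra. lra.
Qed.

Lemma lsum_app f u v : lsum f (u ++ v) = lsum f u + lsum f v.
Proof. induction u; simpl. lra. rewrite IHu. lra. Qed.

Lemma lsum_len u : lsum (fun _ => 1) u = INR (length u).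
Proof. induction u; simpl. auto. rewrite IHu. destruct (length u); simpl; lra. Qed.

Lemma len_occ n w : over n w -> INR (length w) = rsum n (fun c => INR (occ w c)).
Proof. intro H. rewrite <- lsum_len, (lsum_occ n) by auto. apply rsum_ext. intros; lra. Qed.

Lemma sw_cons th a u w : In w (subst_word th (a :: u)) <->
  exists x v, In x (th a) /\ In v (subst_word th u) /\ w = x ++ v.
Proof. change (subst_word th (a :: u)) with (prodl (th a) (subst_word th u)). apply prodl_In. Qed.

Lemma sw_nil th w : In w (subst_word th []) <-> w = [].
Proof. simpl. split. intros [H|[]]; auto. auto. Qed.

Lemma sw_app th u1 u2 w : In w (subst_word th (u1 ++ u2)) <->
  exists w1 w2, In w1 (subst_word th u1) /\ In w2 (subst_word th u2) /\ w = w1 ++ w2.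
Proof.
  revert w; induction u1 as [|a u1 IH]; intro w; simpl app.
  - split. intro H. exists [], w. rewrite sw_nil. auto.
    intros [w1 [w2 [H1 [H2 E]]]]. rewrite sw_nil in H1. subst. auto.
  - rewrite sw_cons. split.
    + intros [x [v [Hx [Hv E]]]]. apply IH in Hv. destruct Hv as [w1 [w2 [H1 [H2 E2]]]].
      exists (x ++ w1), w2. split. apply sw_cons. eauto. split; auto. subst. apply app_assoc.
    + intros [w1 [w2 [H1 [H2 E]]]]. apply sw_cons in H1. destruct H1 as [x [v [Hx [Hv E1]]]].
      exists x, (v ++ w2). split; auto. split. apply IH. eauto. subst. symmetry; apply app_assoc.
Qed.

Lemma ss_In th S w : In w (subst_set th S) <-> exists u, In u S /\ In w (subst_word th u).
Proof. unfold subst_set. apply in_flat_map. Qed.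

Lemma sp_S th m u : subst_pow th (S m) u = subst_set th (subst_pow th m u).
Proof. reflexivity. Qed.

Lemma sp_app th m u1 u2 w : In w (subst_pow th m (u1 ++ u2)) <->
  exists w1 w2, In w1 (subst_pow th m u1) /\ In w2 (subst_pow th m u2) /\ w = w1 ++ w2.
Proof.
  revert w; induction m as [|m IH]; intro w.
  - simpl. split. intros [E|[]]. subst.
    exists u1, u2; auto.
    intros [w1 [w2 [[E1|[]] [[E2|[]] E]]]]. subst; auto.
  - rewrite sp_S, ss_In. split.
    + intros [v [Hv Hw]]. apply IH in Hv. destruct Hv as [v1 [v2 [H1 [H2 E]]]]. subst.
      apply sw_app in Hw. destruct Hw as [w1 [w2 [G1 [G2 E]]]].
      exists w1, w2. rewrite !sp_S, !ss_In. split; [eauto|split; [eauto|auto]].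
    + intros [w1 [w2 [H1 [H2 E]]]]. rewrite sp_S, ss_In in H1, H2.
      destruct H1 as [v1 [Hv1 G1]]. destruct H2 as [v2 [Hv2 G2]].
      exists (v1 ++ v2). split. apply IH. eauto. apply sw_app. eauto.
Qed.

Lemma iter_ss th m S w : In w (Nat.iter m (subst_set th) S) <->
  exists u, In u S /\ In w (subst_pow th m u).
Proof.
  revert w; induction m as [|m IH]; intro w; simpl.
  - split. intro H. exists w; auto. intros [u [H [E|[]]]]. subst; auto.
  - change (Nat.iter m (subst_set th) S) with (Nat.iter m (subst_set th) S).
    rewrite ss_In. split.
    + intros [v [Hv Hw]]. apply IH in Hv. destruct Hv as [u [Hu Hv]]. exists u. split; auto.
      apply ss_In. eauto.
    + intros [u [Hu Hw]]. rewrite ss_In in Hw. destruct Hw as [v [Hv Hw]].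
      exists v. split; auto. apply IH. eauto.
Qed.

Lemma sp_letter th m i w : In w (subst_pow th (S m) [i]) <->
  exists u, In u (th i) /\ In w (subst_pow th m u).
Proof.
  unfold subst_pow. rewrite Nat.iter_succ_r. rewrite iter_ss. split.
  - intros [u [Hu Hw]]. exists u. split; auto. rewrite ss_In in Hu.
    destruct Hu as [v [[E|[]] Hv]]. subst. apply sw_cons in Hv.
    destruct Hv as [x [y [Hx [Hy E]]]]. apply sw_nil in Hy. subst. rewrite app_nil_r; auto.
  - intros [u [Hu Hw]]. exists u. split; auto. apply ss_In. exists [i]. split. left; auto.
    apply sw_cons. exists u, []. rewrite sw_nil. rewrite app_nil_r. auto.
Qed.

Lemma sp_one th i w : In w (subst_pow th 1 [i]) <-> In w (th i).
Proof. rewrite sp_letter. split. intros [u [Hu [E|[]]]]; subst; auto. intro; exists w; simpl; auto. Qed.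

Lemma sp_nil th m w : In w (subst_pow th m []) <-> w = [].
Proof.
  revert w; induction m; intro w. simpl. split. intros [E|[]]; auto. auto.
  rewrite sp_S, ss_In. split.
  - intros [v [Hv Hw]]. apply IHm in Hv. subst. apply sw_nil in Hw. auto.
  - intro E. exists []. rewrite IHm, sw_nil. auto.
Qed.

Lemma sp_cons th m a u w : In w (subst_pow th m (a :: u)) <->
  exists w1 w2, In w1 (subst_pow th m [a]) /\ In w2 (subst_pow th m u) /\ w = w1 ++ w2.
Proof. apply (sp_app th m [a] u). Qed.

Lemma hd_In {A} (d : A) l : l <> [] -> In (hd d l) l.
Proof. destruct l. congruence. intros; left; auto. Qed.

Lemma sw_over n th u w : valid_rsubst n th -> over n u -> In w (subst_word th u) -> over n w.
Proof.
  intro V. revert w; induction u as [|a u IH]; intros w Hu Hw.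
  - apply sw_nil in Hw. subst. intros b [].
  - apply over_cons in Hu. destruct Hu as [Ha Hu]. apply sw_cons in Hw.
    destruct Hw as [x [v [Hx [Hv E]]]]. subst. apply over_app. split.
    + destruct (V a Ha) as [_ H]. exact (proj2 (H x Hx)).
    + eauto.
Qed.

Lemma sp_over n th m u w : valid_rsubst n th -> over n u -> In w (subst_pow th m u) -> over n w.
Proof.
  intro V. revert w; induction m as [|m IH]; intros w Hu Hw.
  - destruct Hw as [E|[]]. subst; auto.
  - rewrite sp_S, ss_In in Hw. destruct Hw as [v [Hv Hw]]. exact (sw_over n th v w V (IH v Hu Hv) Hw).
Qed.

Lemma sw_ex n th u : valid_rsubst n th -> over n u -> exists w, In w (subst_word th u).
Proof.
  intro V. induction u as [|a u IH]; intro Hu.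
  - exists []. left; auto.
  - apply over_cons in Hu. destruct Hu as [Ha Hu]. destruct (IH Hu) as [v Hv].
    destruct (V a Ha) as [Hne _]. exists (hd [] (th a) ++ v). apply sw_cons.
    exists (hd [] (th a)), v. split; auto. apply hd_In; auto.
Qed.

Lemma sp_ex n th m u : valid_rsubst n th -> over n u -> exists w, In w (subst_pow th m u).
Proof.
  intro V. revert u; induction m as [|m IH]; intros u Hu.
  - exists u. left; auto.
  - destruct (IH u Hu) as [v Hv]. destruct (sw_ex n th v V) as [w Hw].
    eapply sp_over; eauto. exists w. rewrite sp_S, ss_In. eauto.
Qed.

Lemma sp_nonempty n th m u : valid_rsubst n th -> over n u -> subst_pow th m u <> [].
Proof. intros V Hu E. destruct (sp_ex n th m u V Hu) as [w Hw]. rewrite E in Hw. inversion Hw. Qed.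

Lemma sw_occ n th u w : valid_rsubst n th -> semi_compatible n th -> over n u ->
  In w (subst_word th u) -> forall b, (b < n)%nat ->
  INR (occ w b) = lsum (fun x => INR (subst_mat th b x)) u.
Proof.
  intros V SC. revert w; induction u as [|a u IH]; intros w Hu Hw b Hb.
  - apply sw_nil in Hw. subst. simpl. auto.
  - apply over_cons in Hu. destruct Hu as [Ha Hu]. apply sw_cons in Hw.
    destruct Hw as [x [v [Hx [Hv E]]]]. subst. simpl.
    unfold occ at 1. rewrite count_occ_app, plus_INR. fold (occ x b). fold (occ v b).
    rewrite (IH v) by auto. unfold subst_mat.
    rewrite (SC a Ha x (hd [] (th a))); auto. apply hd_In. apply V; auto.
Qed.

Lemma sp_occ_eq n th m u v w w' : valid_rsubst n th -> semi_compatible n th ->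
  over n u -> over n v -> (forall c, (c < n)%nat -> occ u c = occ v c) ->
  In w (subst_pow th m u) -> In w' (subst_pow th m v) ->
  forall b, (b < n)%nat -> occ w b = occ w' b.
Proof.
  intros V SC. revert w w'; induction m as [|m IH]; intros w w' Hu Hv Huv Hw Hw'.
  - destruct Hw as [E|[]]. destruct Hw' as [E'|[]]. subst. auto.
  - rewrite sp_S, ss_In in Hw, Hw'. destruct Hw as [x [Hx Hw]]. destruct Hw' as [x' [Hx' Hw']].
    pose proof (sp_over n th m u x V Hu Hx) as Ox.
    pose proof (sp_over n th m v x' V Hv Hx') as Ox'.
    intros b Hb. apply INR_eq.
    rewrite (sw_occ n th x w), (sw_occ n th x' w') by auto.
    rewrite !(lsum_occ n) by auto. apply rsum_ext. intros c Hc.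
    rewrite (IH x x'); auto.
Qed.

Lemma len_sp_letter n th m a w : valid_rsubst n th -> semi_compatible n th -> (a < n)%nat ->
  In w (subst_pow th m [a]) -> INR (length w) = ell th m a.
Proof.
  intros V SC Ha Hw. unfold ell.
  assert (Ha' : over n [a]) by (intros b [E|[]]; subst; auto).
  assert (H0 : In (hd [] (subst_pow th m [a])) (subst_pow th m [a])) by (apply hd_In; apply sp_nonempty with n; auto).
  rewrite !(len_occ n); try (eapply sp_over; eauto).
  apply rsum_ext. intros c Hc. f_equal. eapply sp_occ_eq; eauto.
Qed.

Lemma len_sp n th m u w : valid_rsubst n th -> semi_compatible n th -> over n u ->
  In w (subst_pow th m u) -> INR (length w) = lsum (ell th m) u.
Proof.
  intros V SC. revert w; induction u as [|a u IH]; intros w Hu Hw.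
  - apply sp_nil in Hw. subst. simpl; auto.
  - apply over_cons in Hu. destruct Hu as [Ha Hu]. apply sp_cons in Hw.
    destruct Hw as [w1 [w2 [H1 [H2 E]]]]. subst. rewrite length_app, plus_INR. simpl.
    rewrite (len_sp_letter n th m a w1), (IH w2); auto.
Qed.

Lemma card_sp n th m u : valid_rsubst n th -> semi_compatible n th -> over n u ->
  ln (INR (card (subst_pow th m u))) = lsum (q th m) u.
Proof.
  intros V SC. induction u as [|a u IH]; intro Hu.
  - simpl. rewrite (card_ext _ [[]]). simpl. apply ln_1.
    intro x. rewrite sp_nil. simpl. split. auto. intros [E|[]]; auto.
  - apply over_cons in Hu. destruct Hu as [Ha Hu].
    assert (Ha' : over n [a]) by (intros b [E|[]]; subst; auto).
    rewrite (card_prod (subst_pow th m [a]) (subst_pow th m u) (length (hd [] (subst_pow th m [a])))).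
    + rewrite mult_INR, ln_mult. rewrite IH by auto. simpl. reflexivity.
      apply lt_0_INR. pose proof (card_pos _ (sp_nonempty n th m [a] V Ha')). lia.
      apply lt_0_INR. pose proof (card_pos _ (sp_nonempty n th m u V Hu)). lia.
    + intros w Hw. apply INR_eq. rewrite (len_sp_letter n th m a w) by auto. reflexivity.
    + intro w. apply sp_cons.
Qed.

Definition Av (n : nat) (th : rsubst) (z : nat -> R) (i : nat) : R :=
  rsum n (fun b => INR (subst_mat th b i) * z b).

Lemma lsum_th n th i u f : semi_compatible n th -> valid_rsubst n th -> (i < n)%nat ->
  In u (th i) -> lsum f u = Av n th f i.
Proof.
  intros SC V Hi Hu. destruct (V i Hi) as [Hne Hw]. destruct (Hw u Hu) as [_ Ou].
  rewrite (lsum_occ n) by auto. unfold Av, subst_mat. apply rsum_ext. intros b Hb.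
  rewrite (SC i Hi u (hd [] (th i))); auto. apply hd_In; auto.
Qed.

Lemma over_letter n a : (a < n)%nat -> over n [a].
Proof. intros H b [E|[]]; subst; auto. Qed.

Lemma Av_ext n th f g i : (forall b, (b < n)%nat -> f b = g b) -> Av n th f i = Av n th g i.
Proof. intro H. unfold Av. apply rsum_ext. intros b Hb. rewrite H; auto. Qed.

Lemma Av_mono n th f g i : (forall b, (b < n)%nat -> f b <= g b) -> Av n th f i <= Av n th g i.
Proof. intro H. unfold Av. apply rsum_le. intros b Hb. apply Rmult_le_compat_l. apply pos_INR. auto. Qed.

Lemma col_pos n th i : valid_rsubst n th -> (i < n)%nat ->
  exists b, (b < n)%nat /\ (1 <= subst_mat th b i)%nat.
Proof.
  intros V Hi. destruct (V i Hi) as [Hne Hw].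
  destruct (Hw (hd [] (th i)) (hd_In _ _ Hne)) as [Hne2 Ob].
  destruct (hd [] (th i)) as [|b u] eqn:E. congruence.
  exists b. split. apply Ob; left; auto. unfold subst_mat. rewrite E. unfold occ. simpl.
  destruct (Nat.eq_dec b b). lia. congruence.
Qed.

Lemma Av_pos n th z i : valid_rsubst n th -> (i < n)%nat -> (forall b, (b < n)%nat -> 0 < z b) ->
  0 < Av n th z i.
Proof.
  intros V Hi Hz. destruct (col_pos n th i V Hi) as [b [Hb H1]]. unfold Av.
  eapply Rlt_le_trans. 2: apply (rsum_ge_term n _ b); auto.
  apply Rmult_lt_0_compat. apply lt_0_INR; lia. auto.
  intros c Hc. apply Rmult_le_pos. apply pos_INR. left; auto.
Qed.

Lemma ell_0 th i : ell th 0 i = 1.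
Proof. reflexivity. Qed.

Lemma ell_S n th m i : valid_rsubst n th -> semi_compatible n th -> (i < n)%nat ->
  ell th (S m) i = Av n th (ell th m) i.
Proof.
  intros V SC Hi.
  assert (H0 : In (hd [] (subst_pow th (S m) [i])) (subst_pow th (S m) [i]))
    by (apply hd_In; apply sp_nonempty with n; auto; apply over_letter; auto).
  unfold ell at 1. set (w := hd [] (subst_pow th (S m) [i])) in *.
  apply sp_letter in H0. destruct H0 as [u [Hu Hw]].
  destruct (V i Hi) as [_ Hth]. destruct (Hth u Hu) as [_ Ou].
  rewrite (len_sp n th m u w) by auto. apply lsum_th; auto.
Qed.

Lemma ell_pos n th m i : valid_rsubst n th -> semi_compatible n th -> (i < n)%nat -> 0 < ell th m i.
Proof.
  intros V SC. revert i; induction m; intros i Hi. rewrite ell_0; lra.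
  rewrite (ell_S n) by auto. apply Av_pos; auto.
Qed.

Lemma card_pow_card th m i : card_pow th m i = card (subst_pow th m [i]).
Proof. reflexivity. Qed.

Lemma q_0 th i : q th 0 i = 0.
Proof. unfold q. rewrite card_pow_card. simpl. unfold card. simpl. apply ln_1. Qed.

Lemma card_pow_pos n th m i : valid_rsubst n th -> (i < n)%nat -> (1 <= card_pow th m i)%nat.
Proof. intros V Hi. apply card_pos. apply sp_nonempty with n; auto. apply over_letter; auto. Qed.

Lemma q_nonneg n th m i : valid_rsubst n th -> (i < n)%nat -> 0 <= q th m i.
Proof. intros V Hi. unfold q. rewrite <- ln_1. pose proof (card_pow_pos n th m i V Hi).
  destruct (Nat.eq_dec (card_pow th m i) 1). rewrite e. simpl; lra.
  left. apply ln_increasing. lra. apply lt_1_INR. lia. Qed.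

Lemma card_th n th m i u : valid_rsubst n th -> semi_compatible n th -> (i < n)%nat -> In u (th i) ->
  ln (INR (card (subst_pow th m u))) = Av n th (q th m) i.
Proof.
  intros V SC Hi Hu. destruct (V i Hi) as [_ Hth]. destruct (Hth u Hu) as [_ Ou].
  rewrite (card_sp n) by auto. apply lsum_th; auto.
Qed.

Lemma card_th_eq n th m i u v : valid_rsubst n th -> semi_compatible n th -> (i < n)%nat ->
  In u (th i) -> In v (th i) -> card (subst_pow th m u) = card (subst_pow th m v).
Proof.
  intros V SC Hi Hu Hv. destruct (V i Hi) as [_ Hth].
  destruct (Hth u Hu) as [_ Ou]. destruct (Hth v Hv) as [_ Ov].
  apply INR_eq. apply ln_inv.
  apply lt_0_INR. pose proof (card_pos _ (sp_nonempty n th m u V Ou)). lia.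
  apply lt_0_INR. pose proof (card_pos _ (sp_nonempty n th m v V Ov)). lia.
  rewrite !(card_th n th m i) by auto. reflexivity.
Qed.

Lemma card_flat_le th m D C : (forall u, In u D -> card (subst_pow th m u) = C) ->
  (card (flat_map (subst_pow th m) D) <= length D * C)%nat.
Proof.
  induction D as [|a D IH]; intro H; simpl. unfold card; simpl; lia.
  eapply Nat.le_trans. apply card_app_le. rewrite H by (left; auto).
  pose proof (IH (fun u Hu => H u (or_intror Hu))). lia.
Qed.

Lemma card_flat_eq th m D C : NoDup D -> (forall u, In u D -> card (subst_pow th m u) = C) ->
  (forall u v w, In u D -> In v D -> u <> v -> In w (subst_pow th m u) -> ~ In w (subst_pow th m v)) ->
  card (flat_map (subst_pow th m) D) = (length D * C)%nat.
Proof.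
  induction D as [|a D IH]; intros ND H Hd; simpl. unfold card; simpl; lia.
  inversion ND; subst.
  assert (EE : card (flat_map (subst_pow th m) D) = (length D * C)%nat).
  { apply IH; auto. intros u Hu; apply H; right; auto. intros u v w Hu Hv; apply Hd; right; auto. }
  rewrite card_app_disj. rewrite H by (left; auto). rewrite EE. simpl. lia.
  intros x Hx Hy. apply in_flat_map in Hy. destruct Hy as [b [Hb Hy]].
  apply (Hd a b x); auto. left; auto. right; auto. intro E; subst; contradiction.
Qed.

Lemma card_S_flat th m i : card (subst_pow th (S m) [i]) = card (flat_map (subst_pow th m) (nodup wdec (th i))).
Proof. apply card_ext. intro w. rewrite sp_letter, in_flat_map.
  split; intros [u [Hu Hw]]; exists u; rewrite ?nodup_In in *; auto. Qed.

Lemma card_one th i : card_pow th 1 i = length (nodup wdec (th i)).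
Proof. rewrite card_pow_card. rewrite (card_ext _ (th i)). reflexivity. apply sp_one. Qed.

Lemma ln_le x y : 0 < x -> x <= y -> ln x <= ln y.
Proof. intros H1 [H2|H2]. left; apply ln_increasing; auto. subst; lra. Qed.

Lemma lnINR_pos (c : nat) : (1 <= c)%nat -> 0 < INR c.
Proof. intro; apply lt_0_INR; lia. Qed.

Lemma qS_bounds n th m i : valid_rsubst n th -> semi_compatible n th -> (i < n)%nat ->
  Av n th (q th m) i <= q th (S m) i <= q th 1 i + Av n th (q th m) i.
Proof.
  intros V SC Hi. destruct (V i Hi) as [Hne Hth].
  set (u0 := hd [] (th i)). assert (Hu0 : In u0 (th i)) by (apply hd_In; auto).
  destruct (Hth u0 Hu0) as [_ O0].
  assert (C0 : (1 <= card (subst_pow th m u0))%nat) by (apply card_pos; apply sp_nonempty with n; auto).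
  assert (CS : (1 <= card_pow th (S m) i)%nat) by (apply card_pow_pos with n; auto).
  assert (C1 : (1 <= card_pow th 1 i)%nat) by (apply card_pow_pos with n; auto).
  rewrite <- (card_th n th m i u0) by auto. unfold q. split.
  - apply ln_le. apply lnINR_pos; auto. apply le_INR. rewrite card_pow_card. apply card_incl.
    intros w Hw. apply sp_letter. eauto.
  - rewrite <- ln_mult by (apply lnINR_pos; auto). apply ln_le. apply lnINR_pos; auto.
    rewrite <- mult_INR. apply le_INR. rewrite card_pow_card, card_S_flat, card_one.
    apply card_flat_le. intros u Hu. rewrite nodup_In in Hu. apply (card_th_eq n th m i); auto.
Qed.

Lemma qS_ident n th m i : valid_rsubst n th -> semi_compatible n th -> identical_set_cond n th ->
  (1 <= m)%nat -> (i < n)%nat -> q th (S m) i = Av n th (q th m) i.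
Proof.
  intros V SC ID Hm Hi. destruct (V i Hi) as [Hne Hth].
  set (u0 := hd [] (th i)). assert (Hu0 : In u0 (th i)) by (apply hd_In; auto).
  rewrite <- (card_th n th m i u0) by auto. unfold q. f_equal. f_equal.
  rewrite card_pow_card. apply card_ext. intro w. rewrite sp_letter. split.
  - intros [u [Hu Hw]]. apply (ID i Hi m Hm u u0); auto.
  - intro Hw; eauto.
Qed.

Lemma qS_disj n th m i : valid_rsubst n th -> semi_compatible n th -> disjoint_set_cond n th ->
  (i < n)%nat -> q th (S m) i = q th 1 i + Av n th (q th m) i.
Proof.
  intros V SC DJ Hi. destruct (V i Hi) as [Hne Hth].
  set (u0 := hd [] (th i)). assert (Hu0 : In u0 (th i)) by (apply hd_In; auto).
  destruct (Hth u0 Hu0) as [_ O0].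
  assert (C0 : (1 <= card (subst_pow th m u0))%nat) by (apply card_pos; apply sp_nonempty with n; auto).
  assert (C1 : (1 <= card_pow th 1 i)%nat) by (apply card_pow_pos with n; auto).
  rewrite <- (card_th n th m i u0) by auto. unfold q.
  rewrite <- ln_mult by (apply lnINR_pos; auto). f_equal.
  rewrite <- mult_INR. f_equal. rewrite card_pow_card, card_S_flat, card_one.
  apply card_flat_eq. apply NoDup_nodup.
  intros u Hu. rewrite nodup_In in Hu. apply (card_th_eq n th m i); auto.
  intros u v w Hu Hv Huv Hw Hw'. rewrite nodup_In in Hu, Hv.
  destruct m as [|m].
  - destruct Hw as [E|[]]; destruct Hw' as [E'|[]]; subst; auto.
  - apply (DJ i Hi (S m) ltac:(lia) u v Hu Hv Huv w). auto.
Qed.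

Definition Hyp n th lam Rv := valid_rsubst n th /\ semi_compatible n th /\
  primitive_mat n (subst_mat th) /\ PF_right n (subst_mat th) lam Rv.

Definition P n th j z := Nat.iter j (Av n th) z.
Definition Rdot n (Rv : nat -> R) z := rsum n (fun i => z i * Rv i).

Lemma Av_lin n th c d x y i : Av n th (fun b => c * x b + d * y b) i = c * Av n th x i + d * Av n th y i.
Proof. unfold Av. rewrite <- !rsum_scal, <- rsum_plus. apply rsum_ext. intros; ring. Qed.

Lemma P_S n th j z : P n th (S j) z = Av n th (P n th j z).
Proof. reflexivity. Qed.

Lemma P_Sr n th j z : P n th (S j) z = P n th j (Av n th z).
Proof. unfold P. apply Nat.iter_succ_r. Qed.

Lemma P_add n th j1 j2 z : P n th (j1 + j2) z = P n th j1 (P n th j2 z).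
Proof. unfold P. apply Nat.iter_add. Qed.

Lemma P_ext n th j f g i : (i < n)%nat -> (forall b, (b < n)%nat -> f b = g b) -> P n th j f i = P n th j g i.
Proof. revert i. induction j; intros i Hi H. simpl; auto. rewrite !P_S. apply Av_ext. intros; auto. Qed.

Lemma P_mono n th j f g i : (i < n)%nat -> (forall b, (b < n)%nat -> f b <= g b) -> P n th j f i <= P n th j g i.
Proof. revert i. induction j; intros i Hi H. simpl; auto. rewrite !P_S. apply Av_mono. intros; auto. Qed.

Lemma P_lin n th j c d x y i : P n th j (fun b => c * x b + d * y b) i = c * P n th j x i + d * P n th j y i.
Proof. revert i. induction j; intro i. reflexivity. rewrite !P_S.
  rewrite (Av_ext n th _ (fun b => c * P n th j x b + d * P n th j y b)). apply Av_lin. intros; auto. Qed.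

Lemma P_pos n th j z i : valid_rsubst n th -> (i < n)%nat -> (forall b, (b < n)%nat -> 0 < z b) -> 0 < P n th j z i.
Proof. intros V. revert i. induction j; intros i Hi H. simpl; auto. rewrite P_S. apply Av_pos; auto. Qed.

Lemma P_bound n th j x y al be i : (i < n)%nat ->
  (forall b, (b < n)%nat -> al * y b <= x b <= be * y b) ->
  al * P n th j y i <= P n th j x i <= be * P n th j y i.
Proof.
  intros Hi H. split.
  - assert (H0 : P n th j (fun b => 0 * x b + 0 * y b) i <= P n th j (fun b => 1 * x b + (- al) * y b) i).
    { apply P_mono; auto. intros b Hb. specialize (H b Hb). lra. }
    rewrite !P_lin in H0. lra.
  - assert (H0 : P n th j (fun b => 0 * x b + 0 * y b) i <= P n th j (fun b => (-1) * x b + be * y b) i).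
    { apply P_mono; auto. intros b Hb. specialize (H b Hb). lra. }
    rewrite !P_lin in H0. lra.
Qed.

Lemma rsum_eqb_ind n z i : (i < n)%nat -> rsum n (fun j => INR (if Nat.eqb j i then 1%nat else 0%nat) * z j) = z i.
Proof. intro Hi. rewrite <- (rsum_ind n z i Hi). apply rsum_ext. intros j Hj.
  destruct (Nat.eqb_spec j i); destruct (Nat.eq_dec i j); subst; simpl; try lra; congruence. Qed.

Lemma P_formula n th k z i : (i < n)%nat ->
  P n th k z i = rsum n (fun j => INR (mat_pow n (subst_mat th) k j i) * z j).
Proof.
  revert z i; induction k; intros z i Hi.
  - simpl. symmetry. apply rsum_eqb_ind; auto.
  - rewrite P_Sr, IHk by auto. unfold Av. simpl.
    rewrite (rsum_ext n (fun j => INR (nsum n (fun l => (subst_mat th j l * mat_pow n (subst_mat th) k l i)%nat)) * z j)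
                      (fun j => rsum n (fun l => INR (mat_pow n (subst_mat th) k l i) * (INR (subst_mat th j l) * z j)))).
    rewrite rsum_swap. apply rsum_ext. intros l Hl. rewrite <- rsum_scal. reflexivity.
    intros j Hj. rewrite INR_nsum, Rmult_comm, <- rsum_scal. apply rsum_ext. intros l Hl.
    rewrite mult_INR. ring.
Qed.

Lemma Rdot_Av n th lam Rv z : PF_right n (subst_mat th) lam Rv ->
  Rdot n Rv (Av n th z) = lam * Rdot n Rv z.
Proof.
  intros [_ [_ PF]]. unfold Rdot, Av.
  rewrite (rsum_ext n (fun i => rsum n (fun b => INR (subst_mat th b i) * z b) * Rv i)
    (fun i => rsum n (fun b => z b * (INR (subst_mat th b i) * Rv i)))).
  rewrite rsum_swap. rewrite <- rsum_scal. apply rsum_ext. intros b Hb.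
  rewrite rsum_scal, PF by auto. ring.
  intros i Hi. rewrite Rmult_comm, <- rsum_scal. apply rsum_ext. intros; ring.
Qed.

Lemma Rdot_P n th lam Rv j z : PF_right n (subst_mat th) lam Rv ->
  Rdot n Rv (P n th j z) = lam ^ j * Rdot n Rv z.
Proof. intro PF. induction j. simpl; ring. rewrite P_S, (Rdot_Av n th lam Rv), IHj by auto. simpl; ring. Qed.

Lemma Rdot_le n Rv f g : (forall i, (i < n)%nat -> 0 < Rv i) -> (forall i, (i < n)%nat -> f i <= g i) ->
  Rdot n Rv f <= Rdot n Rv g.
Proof. intros HR H. apply rsum_le. intros i Hi. apply Rmult_le_compat_r. left; auto. auto. Qed.

Lemma Rdot_pos n Rv z : (0 < n)%nat -> (forall i, (i < n)%nat -> 0 < Rv i) -> (forall i, (i < n)%nat -> 0 < z i) ->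
  0 < Rdot n Rv z.
Proof. intros Hn HR H. apply rsum_pos; auto. intros i Hi. apply Rmult_lt_0_compat; auto. Qed.

Lemma Rdot_lin n Rv c d x y : Rdot n Rv (fun b => c * x b + d * y b) = c * Rdot n Rv x + d * Rdot n Rv y.
Proof. unfold Rdot. rewrite <- !rsum_scal, <- rsum_plus. apply rsum_ext. intros; ring. Qed.

Lemma n_pos n Rv : rsum n Rv = 1 -> (0 < n)%nat.
Proof. destruct n. simpl. lra. lia. Qed.

Lemma lam_ge1 n th lam Rv : valid_rsubst n th -> PF_right n (subst_mat th) lam Rv -> 1 <= lam.
Proof.
  intros V PFr. pose proof PFr as [HR [HS PF]].
  assert (E : Rdot n Rv (Av n th (fun _ => 1)) = lam * Rdot n Rv (fun _ => 1)) by (apply Rdot_Av; auto).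
  unfold Rdot at 2 in E. rewrite (rsum_ext _ _ Rv) in E by (intros; ring). rewrite HS in E.
  assert (Rdot n Rv (fun _ => 1) <= Rdot n Rv (Av n th (fun _ => 1))).
  { apply Rdot_le; auto. intros i Hi. destruct (col_pos n th i V Hi) as [b [Hb H1]]. unfold Av.
    eapply Rle_trans. 2: apply (rsum_ge_term n _ b); auto. apply le_INR in H1. simpl in H1. lra.
    intros c Hc. apply Rmult_le_pos. apply pos_INR. lra. }
  unfold Rdot at 1 in H. rewrite (rsum_ext _ _ Rv) in H by (intros; ring). lra.
Qed.

Definition Kx n th k := rsum n (fun i => rsum n (fun j => INR (mat_pow n (subst_mat th) k j i))).

Lemma entry_le_Kx n th k i j : (i < n)%nat -> (j < n)%nat -> INR (mat_pow n (subst_mat th) k j i) <= Kx n th k.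
Proof.
  intros Hi Hj. unfold Kx. eapply Rle_trans.
  2: apply (rsum_ge_term n _ i); auto; intros; apply rsum_nonneg; intros; apply pos_INR.
  apply (rsum_ge_term n (fun j => INR (mat_pow n (subst_mat th) k j i)) j); auto. intros; apply pos_INR.
Qed.

Lemma contract n th k x y al be : (0 < n)%nat ->
  (forall i j, (i < n)%nat -> (j < n)%nat -> (0 < mat_pow n (subst_mat th) k i j)%nat) ->
  (forall i, (i < n)%nat -> 0 < y i) ->
  (forall i, (i < n)%nat -> al * y i <= x i <= be * y i) ->
  exists al' be', be' - al' = (1 - / Kx n th k) * (be - al) /\
    forall i, (i < n)%nat -> al' * P n th k y i <= P n th k x i <= be' * P n th k y i.
Proof.
  intros Hn Hpr Hy Hxy.
  set (K := Kx n th k).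
  assert (HK : 1 <= K).
  { eapply Rle_trans. 2: apply (entry_le_Kx n th k 0 0); auto.
    pose proof (Hpr 0%nat 0%nat Hn Hn). apply le_INR in H. simpl in H. exact H. }
  set (s := rsum n y). assert (Hs : 0 < s) by (apply rsum_pos; auto).
  set (su := rsum n (fun j => x j - al * y j)).
  set (sv := rsum n (fun j => be * y j - x j)).
  assert (Hsu : 0 <= su) by (apply rsum_nonneg; intros j Hj; specialize (Hxy j Hj); lra).
  assert (Hsv : 0 <= sv) by (apply rsum_nonneg; intros j Hj; specialize (Hxy j Hj); lra).
  assert (Hsum : su + sv = (be - al) * s).
  { unfold su, sv, s. rewrite <- rsum_plus, <- rsum_scal. apply rsum_ext. intros; ring. }
  exists (al + su / (K * s)), (be - sv / (K * s)). split.
  { replace (be - sv / (K * s) - (al + su / (K * s))) with (be - al - (su + sv) / (K * s)) by (field; lra).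
    rewrite Hsum. field. lra. }
  intros i Hi.
  set (mp := fun j => INR (mat_pow n (subst_mat th) k j i)).
  assert (Hmp : forall j, (j < n)%nat -> 1 <= mp j <= K).
  { intros j Hj. split. pose proof (Hpr j i Hj Hi). apply le_INR in H. unfold mp; simpl in *; lra.
    apply entry_le_Kx; auto. }
  assert (A1 : su <= P n th k x i - al * P n th k y i).
  { rewrite !P_formula by auto. rewrite <- rsum_scal, <- rsum_minus. apply rsum_le.
    intros j Hj. specialize (Hmp j Hj). specialize (Hxy j Hj). fold (mp j). nra. }
  assert (A2 : sv <= be * P n th k y i - P n th k x i).
  { rewrite !P_formula by auto. rewrite <- rsum_scal, <- rsum_minus. apply rsum_le.
    intros j Hj. specialize (Hmp j Hj). specialize (Hxy j Hj). fold (mp j). nra. }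
  assert (A3 : P n th k y i <= K * s).
  { rewrite P_formula by auto. unfold s. rewrite <- rsum_scal. apply rsum_le.
    intros j Hj. specialize (Hmp j Hj). specialize (Hy j Hj). fold (mp j). nra. }
  assert (T1 : su / (K * s) * P n th k y i <= su).
  { replace su with (su / (K * s) * (K * s)) at 2 by (field; lra).
    apply Rmult_le_compat_l; auto. unfold Rdiv; apply Rmult_le_pos; auto; left; apply Rinv_0_lt_compat; nra. }
  assert (T2 : sv / (K * s) * P n th k y i <= sv).
  { replace sv with (sv / (K * s) * (K * s)) at 2 by (field; lra).
    apply Rmult_le_compat_l; auto. unfold Rdiv; apply Rmult_le_pos; auto; left; apply Rinv_0_lt_compat; nra. }
  split; nra.
Qed.

Lemma Rdot_scal n Rv c f : Rdot n Rv (fun i => c * f i) = c * Rdot n Rv f.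
Proof. unfold Rdot. rewrite <- rsum_scal. apply rsum_ext. intros; ring. Qed.

Lemma ratio_conv n th lam Rv x y : valid_rsubst n th -> primitive_mat n (subst_mat th) ->
  PF_right n (subst_mat th) lam Rv -> (forall i, (i < n)%nat -> 0 < y i) ->
  forall i, (i < n)%nat -> forall eps, 0 < eps -> exists N, forall j, (N <= j)%nat ->
  Rabs (P n th j x i / P n th j y i - Rdot n Rv x / Rdot n Rv y) < eps.
Proof.
  intros V [k Hk] PFr Hy i Hi eps Heps.
  pose proof PFr as [HR [HS PF]].
  assert (Hn : (0 < n)%nat) by (eapply n_pos; eauto).
  assert (Hlam : 1 <= lam) by (eapply lam_ge1; eauto).
  set (B := rsum n (fun j => Rabs (x j / y j))).
  assert (HB0 : 0 <= B) by (apply rsum_nonneg; intros; apply Rabs_pos).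
  assert (Hinit : forall j, (j < n)%nat -> (-B) * y j <= x j <= B * y j).
  { intros j Hj. assert (Rabs (x j / y j) <= B) by (apply (rsum_ge_term n (fun j => Rabs (x j / y j))); auto; intros; apply Rabs_pos).
    assert (x j = (x j / y j) * y j) by (field; specialize (Hy j Hj); lra).
    pose proof (Rle_abs (x j / y j)). pose proof (Rle_abs (- (x j / y j))). rewrite Rabs_Ropp in H2.
    specialize (Hy j Hj). split; rewrite H0; nra. }
  set (K := Kx n th k).
  assert (HK : 1 <= K).
  { eapply Rle_trans. 2: apply (entry_le_Kx n th k 0 0); auto.
    pose proof (Hk 0%nat 0%nat Hn Hn). apply le_INR in H. simpl in H. exact H. }
  set (rho := 1 - / K).
  assert (Hrho : 0 <= rho < 1).
  { unfold rho. split. assert (/ K <= 1). { rewrite <- Rinv_1. apply Rinv_le_contravar; lra. } lra.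
    assert (0 < / K) by (apply Rinv_0_lt_compat; lra). lra. }
  assert (Hit : forall t, exists al be, be - al = rho ^ t * (B - - B) /\
     forall i, (i < n)%nat -> al * P n th (t * k) y i <= P n th (t * k) x i <= be * P n th (t * k) y i).
  { induction t.
    - exists (-B), B. split. simpl; ring. intros i0 Hi0. simpl. apply Hinit; auto.
    - destruct IHt as [al [be [E Hb]]].
      destruct (contract n th k (P n th (t * k) x) (P n th (t * k) y) al be Hn Hk) as [al' [be' [E' Hb']]].
      + intros; apply P_pos; auto.
      + auto.
      + exists al', be'. split. rewrite E', E. simpl. fold K. fold rho. ring.
        replace (S t * k)%nat with (k + t * k)%nat by lia. intros i0 Hi0. rewrite !P_add. auto. }
  destruct (pow_lt_1_zero rho ltac:(rewrite Rabs_pos_eq; lra) (eps / (2 * B + 1))) as [T HT].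
  { apply Rdiv_lt_0_compat; lra. }
  destruct (Hit T) as [al [be [E Hb]]].
  exists (T * k)%nat. intros j Hj.
  assert (Hbj : forall i0, (i0 < n)%nat -> al * P n th j y i0 <= P n th j x i0 <= be * P n th j y i0).
  { intros i0 Hi0. replace j with ((j - T * k) + T * k)%nat by lia. rewrite !P_add.
    apply P_bound; auto. }
  assert (HPy : 0 < P n th j y i) by (apply P_pos; auto).
  assert (Hr : al <= P n th j x i / P n th j y i <= be).
  { destruct (Hbj i Hi). split. apply Rmult_le_reg_r with (P n th j y i); auto. field_simplify; lra.
    apply Rmult_le_reg_r with (P n th j y i); auto. field_simplify; lra. }
  assert (HRy : 0 < Rdot n Rv y) by (apply Rdot_pos; auto).
  assert (Hlj : 0 < lam ^ j) by (apply pow_lt; lra).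
  assert (Hc : al <= Rdot n Rv x / Rdot n Rv y <= be).
  { assert (L1 : Rdot n Rv (fun i0 => al * P n th j y i0) <= Rdot n Rv (P n th j x))
      by (apply Rdot_le; auto; intros; apply Hbj; auto).
    assert (L2 : Rdot n Rv (P n th j x) <= Rdot n Rv (fun i0 => be * P n th j y i0))
      by (apply Rdot_le; auto; intros; apply Hbj; auto).
    rewrite Rdot_scal, !(Rdot_P n th lam) in L1, L2 by auto.
    split.
    - apply Rmult_le_reg_r with (Rdot n Rv y); auto. field_simplify; try lra.
      apply Rmult_le_reg_r with (lam ^ j); auto. nra.
    - apply Rmult_le_reg_r with (Rdot n Rv y); auto. field_simplify; try lra.
      apply Rmult_le_reg_r with (lam ^ j); auto. nra. }
  specialize (HT T (le_n T)). rewrite Rabs_pos_eq in HT by (apply pow_le; lra).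
  assert (be - al < eps).
  { rewrite E. assert (rho ^ T * (2 * B + 1) < eps).
    { apply Rmult_lt_compat_r with (r := 2 * B + 1) in HT. 2: lra.
      unfold Rdiv in HT. rewrite Rmult_assoc, Rinv_l in HT by lra. lra. }
    assert (0 <= rho ^ T) by (apply pow_le; lra). nra. }
  apply Rabs_def1; lra.
Qed.

Lemma liminf_exists (u : nat -> R) a b : (forall m, a <= u m) -> (exists N, forall m, (N <= m)%nat -> u m <= b) ->
  exists l, is_liminf u l.
Proof.
  intros Ha [N Hb]. destruct (ex_LimInf_seq u) as [[l| |] H].
  - exists l. intros eps Heps. destruct (H (mkposreal eps Heps)) as [H1 H2]. simpl in *. split; auto.
  - destruct (H b) as [N' HN']. specialize (HN' (Nat.max N N') ltac:(lia)). specialize (Hb (Nat.max N N') ltac:(lia)). lra.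
  - destruct (H a 0%nat) as [m [_ Hm]]. specialize (Ha m). lra.
Qed.

Lemma limsup_exists (u : nat -> R) a b : (forall m, a <= u m) -> (exists N, forall m, (N <= m)%nat -> u m <= b) ->
  exists l, is_limsup u l.
Proof.
  intros Ha [N Hb]. destruct (ex_LimSup_seq u) as [[l| |] H].
  - exists l. intros eps Heps. destruct (H (mkposreal eps Heps)) as [H1 H2]. simpl in *. split; auto.
  - destruct (H b N) as [m [Hm1 Hm2]]. specialize (Hb m Hm1). lra.
  - destruct (H a) as [N' HN']. specialize (HN' N' (le_n _)). specialize (Ha N'). lra.
Qed.

Lemma liminf_ge u l a : is_liminf u l -> (forall eps, 0 < eps -> exists N, forall m, (N <= m)%nat -> a - eps <= u m) -> a <= l.
Proof.
  intros H Ha. destruct (Rle_lt_dec a l); auto.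
  set (e := (a - l) / 3). assert (He : 0 < e) by (unfold e; lra).
  destruct (H e He) as [_ H2]. destruct (Ha e He) as [N HN]. destruct (H2 N) as [m [Hm Hum]].
  specialize (HN m Hm). unfold e in *. lra.
Qed.

Lemma limsup_le u s b : is_limsup u s -> (forall eps, 0 < eps -> exists N, forall m, (N <= m)%nat -> u m <= b + eps) -> s <= b.
Proof.
  intros H Hb. destruct (Rle_lt_dec s b); auto.
  set (e := (s - b) / 3). assert (He : 0 < e) by (unfold e; lra).
  destruct (H e He) as [_ H2]. destruct (Hb e He) as [N HN]. destruct (H2 N) as [m [Hm Hum]].
  specialize (HN m Hm). unfold e in *. lra.
Qed.

Lemma liminf_le_limsup u l s : is_liminf u l -> is_limsup u s -> l <= s.
Proof.
  intros Hl Hs. destruct (Rle_lt_dec l s); auto.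
  set (e := (l - s) / 3). assert (He : 0 < e) by (unfold e; lra).
  destruct (Hl e He) as [[N1 H1] _]. destruct (Hs e He) as [[N2 H2] _].
  specialize (H1 (N1 + N2)%nat ltac:(lia)). specialize (H2 (N1 + N2)%nat ltac:(lia)). unfold e in *. lra.
Qed.

Lemma liminf_conv u l L : is_liminf u l ->
  (forall eps, 0 < eps -> exists N, forall m, (N <= m)%nat -> Rabs (u m - L) < eps) -> l = L.
Proof.
  intros H HL. apply Rle_antisym.
  - destruct (Rle_lt_dec l L); auto.
    set (e := (l - L) / 3). assert (He : 0 < e) by (unfold e; lra).
    destruct (H e He) as [[N1 H1] _]. destruct (HL e He) as [N2 H2].
    specialize (H1 (N1 + N2)%nat ltac:(lia)). specialize (H2 (N1 + N2)%nat ltac:(lia)).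
    apply Rabs_def2 in H2. unfold e in *. lra.
  - apply (liminf_ge u); auto. intros eps Heps. destruct (HL eps Heps) as [N HN]. exists N.
    intros m Hm. specialize (HN m Hm). apply Rabs_def2 in HN. lra.
Qed.

Lemma le_eps a x : (forall eps, 0 < eps -> a - eps <= x) -> a <= x.
Proof. intro H. destruct (Rle_lt_dec a x); auto. specialize (H ((a - x) / 2) ltac:(lra)). lra. Qed.

Lemma bernoulli x r : 0 <= x -> 1 + INR r * x <= (1 + x) ^ r.
Proof. intro Hx. induction r. simpl; lra. rewrite S_INR. simpl.
  assert (0 <= INR r * x) by (apply Rmult_le_pos; auto; apply pos_INR). nra. Qed.

Lemma Rdot_ext n Rv f g : (forall i, (i < n)%nat -> f i = g i) -> Rdot n Rv f = Rdot n Rv g.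
Proof. intro H. unfold Rdot. apply rsum_ext. intros i Hi. rewrite H; auto. Qed.

Lemma ell_shift n th r j i : valid_rsubst n th -> semi_compatible n th -> (i < n)%nat ->
  ell th (j + r) i = P n th j (ell th r) i.
Proof.
  intros V SC. revert i. induction j; intros i Hi. reflexivity.
  simpl plus. rewrite (ell_S n) by auto. rewrite P_S. apply Av_ext. intros; auto.
Qed.

Lemma Rdot_ell n th lam Rv r : valid_rsubst n th -> semi_compatible n th -> PF_right n (subst_mat th) lam Rv ->
  Rdot n Rv (ell th r) = lam ^ r.
Proof.
  intros V SC PFr. rewrite (Rdot_ext n Rv _ (P n th r (ell th 0))).
  rewrite (Rdot_P n th lam) by auto. unfold Rdot. rewrite (rsum_ext _ _ Rv).
  destruct PFr as [_ [HS _]]. rewrite HS. ring. intros; rewrite ell_0; ring.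
  intros i Hi. rewrite <- (ell_shift n th 0 r i) by auto. rewrite Nat.add_0_r. auto.
Qed.

Lemma q_shift_ge n th r j i : valid_rsubst n th -> semi_compatible n th -> (i < n)%nat ->
  P n th j (q th r) i <= q th (j + r) i.
Proof.
  intros V SC. revert i. induction j; intros i Hi. simpl. lra.
  simpl plus. rewrite P_S. eapply Rle_trans. apply Av_mono. intros b Hb. apply IHj; auto.
  apply qS_bounds; auto.
Qed.

Definition useq th i m := q th m i / ell th m i.

Lemma lower_bound n th lam Rv i r : Hyp n th lam Rv -> (i < n)%nat ->
  forall eps, 0 < eps -> exists N, forall m, (N <= m)%nat ->
  / lam ^ r * qR n th Rv r - eps <= useq th i m.
Proof.
  intros [V [SC [PR PFr]]] Hi eps Heps.
  destruct (ratio_conv n th lam Rv (q th r) (ell th r) V PR PFr) with (i := i) (eps := eps) as [N0 HN0]; auto.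
  intros; apply ell_pos with n; auto.
  exists (N0 + r)%nat. intros m Hm. specialize (HN0 (m - r)%nat ltac:(lia)).
  apply Rabs_def2 in HN0. rewrite Rdot_ell with (lam := lam) in HN0 by auto.
  unfold useq. replace m with ((m - r) + r)%nat by lia.
  rewrite (ell_shift n th r (m - r) i) by auto.
  assert (0 < P n th (m - r) (ell th r) i) by (apply P_pos; auto; intros; apply ell_pos with n; auto).
  assert (P n th (m - r) (q th r) i / P n th (m - r) (ell th r) i <= q th (m - r + r) i / P n th (m - r) (ell th r) i).
  { unfold Rdiv. apply Rmult_le_compat_r. left; apply Rinv_0_lt_compat; auto. apply q_shift_ge; auto. }
  unfold qR. fold (Rdot n Rv (q th r)). unfold Rdiv in *. rewrite Rmult_comm. lra.
Qed.

Lemma useq_nonneg n th m i : valid_rsubst n th -> semi_compatible n th -> (i < n)%nat -> 0 <= useq th i m.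
Proof. intros V SC Hi. unfold useq, Rdiv. apply Rmult_le_pos. apply q_nonneg with n; auto.
  left; apply Rinv_0_lt_compat; apply ell_pos with n; auto. Qed.

Fixpoint Yv (n : nat) (th : rsubst) (m : nat) : nat -> R :=
  match m with O => fun _ => 0 | S m' => fun i => q th 1 i + Av n th (Yv n th m') i end.

Lemma q_le_Y n th m i : valid_rsubst n th -> semi_compatible n th -> (i < n)%nat -> q th m i <= Yv n th m i.
Proof.
  intros V SC. revert i; induction m; intros i Hi. simpl. rewrite q_0. lra.
  pose proof (qS_bounds n th m i V SC Hi) as [_ Hb]. simpl.
  eapply Rle_trans; [exact Hb|]. apply Rplus_le_compat_l. apply Av_mono. auto.
Qed.

Lemma Av_zero n th i : Av n th (fun _ => 0) i = 0.
Proof. unfold Av. rewrite (rsum_ext _ _ (fun _ => 0)). apply rsum_zero. intros; ring. Qed.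

Lemma Y_diff n th m i : Yv n th (S m) i = Yv n th m i + P n th m (q th 1) i.
Proof.
  revert i. induction m; intro i. simpl. rewrite Av_zero. ring.
  change (Yv n th (S (S m)) i) with (q th 1 i + Av n th (Yv n th (S m)) i).
  change (Yv n th (S m) i) with (q th 1 i + Av n th (Yv n th m) i).
  rewrite P_S. rewrite (Av_ext n th (Yv n th (S m)) (fun b => 1 * Yv n th m b + 1 * P n th m (q th 1) b)).
  rewrite Av_lin. ring. intros b Hb. rewrite IHm. ring.
Qed.

Lemma delta_choice d c eps : 0 < d -> 0 <= c -> 0 < eps -> exists del, 0 < del /\ del <= d / 2 /\
  del + (c + del) / (d - del) <= c / d + eps.
Proof.
  intros Hd Hc He. set (W := d * d + 2 * (d + c)). assert (HW : 0 < W) by (unfold W; nra).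
  exists (Rmin (d / 2) (eps * (d * d) / W)).
  set (del := Rmin (d / 2) (eps * (d * d) / W)).
  assert (H1 : del <= d / 2) by apply Rmin_l.
  assert (H2 : del <= eps * (d * d) / W) by apply Rmin_r.
  assert (H0 : 0 < del). { unfold del. apply Rmin_pos. lra. apply Rdiv_lt_0_compat; auto. apply Rmult_lt_0_compat; auto. nra. }
  split; auto. split; auto.
  set (D := d - del). assert (HD : d / 2 <= D) by (unfold D; lra).
  assert (E : (c + del) / D = c / d + del * (d + c) / (d * D)) by (unfold D; field; lra).
  rewrite E.
  assert (F : del * (d + c) / (d * D) <= 2 * del * (d + c) / (d * d)).
  { unfold Rdiv. rewrite Rinv_mult, Rinv_mult.
    assert (/ D <= 2 * / d). { replace (2 * / d) with (/ (d / 2)) by (field; lra). apply Rinv_le_contravar; lra. }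
    assert (0 <= del * (d + c) * / d). { apply Rmult_le_pos. nra. left; apply Rinv_0_lt_compat; auto. }
    nra. }
  assert (G : del + 2 * del * (d + c) / (d * d) = del * W / (d * d)) by (unfold W; field; lra).
  assert (Hh : del * W / (d * d) <= eps).
  { apply Rmult_le_compat_r with (r := W) in H2; [|lra].
    replace (eps * (d * d) / W * W) with (eps * (d * d)) in H2 by (field; lra).
    replace eps with (eps * (d * d) / (d * d)) by (field; lra).
    unfold Rdiv. apply Rmult_le_compat_r; auto. left; apply Rinv_0_lt_compat; nra. }
  lra.
Qed.

Lemma Rdot_nonneg n th lam Rv r : Hyp n th lam Rv -> 0 <= Rdot n Rv (q th r).
Proof. intros [V [SC [PR [HR _]]]]. apply rsum_nonneg. intros i Hi.
  apply Rmult_le_pos. apply q_nonneg with n; auto. left; auto. Qed.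

Lemma upper_bound n th lam Rv i : Hyp n th lam Rv -> 1 < lam -> (i < n)%nat ->
  forall eps, 0 < eps -> exists N, forall m, (N <= m)%nat ->
  useq th i m <= / (lam - 1) * qR n th Rv 1 + eps.
Proof.
  intros HH Hlam Hi eps Heps. pose proof HH as [V [SC [PR PFr]]].
  set (c1 := Rdot n Rv (q th 1)).
  assert (Hc1 : 0 <= c1) by (exact (Rdot_nonneg n th lam Rv 1 HH)).
  destruct (delta_choice (lam - 1) c1 eps ltac:(lra) Hc1 Heps) as [del [Hdel [Hdel2 Hdel3]]].
  assert (He0 : forall b, (b < n)%nat -> 0 < ell th 0 b) by (intros; rewrite ell_0; lra).
  assert (Ep0 : forall j, P n th j (ell th 0) i = ell th j i).
  { intro j. rewrite <- (ell_shift n th 0 j i) by auto. rewrite Nat.add_0_r. auto. }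
  assert (Ep1 : forall j, P n th j (ell th 1) i = ell th (S j) i).
  { intro j. rewrite <- (ell_shift n th 1 j i) by auto. f_equal. lia. }
  destruct (ratio_conv n th lam Rv (q th 1) (ell th 0) V PR PFr He0 i Hi del Hdel) as [J1 HJ1].
  destruct (ratio_conv n th lam Rv (ell th 1) (ell th 0) V PR PFr He0 i Hi del Hdel) as [J2 HJ2].
  rewrite (Rdot_ell n th lam Rv 0) in HJ1 by auto. rewrite (Rdot_ell n th lam Rv 0), (Rdot_ell n th lam Rv 1) in HJ2 by auto.
  assert (Hepos : forall m, 0 < ell th m i) by (intros; apply ell_pos with n; auto).
  set (rho := lam - del).
  assert (A1 : forall j, (J1 <= j)%nat -> P n th j (q th 1) i <= (c1 + del) * ell th j i).
  { intros j Hj. specialize (HJ1 j Hj). rewrite Ep0 in HJ1. apply Rabs_def2 in HJ1.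
    simpl in HJ1. fold c1 in HJ1. destruct HJ1 as [HJ1 _].
    specialize (Hepos j). unfold Rdiv in HJ1. rewrite Rinv_1, Rmult_1_r in HJ1.
    apply Rlt_le. apply Rmult_lt_reg_r with (/ ell th j i). apply Rinv_0_lt_compat; auto.
    replace ((c1 + del) * ell th j i * / ell th j i) with (c1 + del) by (field; lra). lra. }
  assert (A2 : forall j, (J2 <= j)%nat -> rho * ell th j i <= ell th (S j) i).
  { intros j Hj. specialize (HJ2 j Hj). rewrite Ep0, Ep1 in HJ2. apply Rabs_def2 in HJ2.
    simpl in HJ2. destruct HJ2 as [_ HJ2].
    specialize (Hepos j). replace (lam ^ 1 / 1) with lam in HJ2 by (simpl; field).
    apply Rlt_le. apply Rmult_lt_reg_r with (/ ell th j i). apply Rinv_0_lt_compat; auto.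
    replace (rho * ell th j i * / ell th j i) with rho by (field; lra). unfold rho. unfold Rdiv in HJ2. lra. }
  set (J := (J1 + J2)%nat).
  set (B' := (c1 + del) / (rho - 1)).
  assert (Hrho : 1 < rho) by (unfold rho; lra).
  assert (HB' : 0 <= B') by (unfold B', Rdiv; apply Rmult_le_pos; [lra|left; apply Rinv_0_lt_compat; lra]).
  assert (Claim : forall d, Yv n th (J + d) i <= Yv n th J i + B' * ell th (J + d) i /\
     (1 + INR d * (rho - 1)) * ell th J i <= ell th (J + d) i).
  { induction d.
    - rewrite Nat.add_0_r. specialize (Hepos J). split. nra. change (INR 0) with 0. lra.
    - destruct IHd as [IH1 IH2]. replace (J + S d)%nat with (S (J + d)) by lia.
      assert (Hg : rho * ell th (J + d) i <= ell th (S (J + d)) i) by (apply A2; unfold J; lia).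
      assert (Hq : P n th (J + d) (q th 1) i <= (c1 + del) * ell th (J + d) i) by (apply A1; unfold J; lia).
      split.
      + rewrite Y_diff. assert (EB : B' * rho = B' + (c1 + del)) by (unfold B'; field; lra).
        assert (T1 : 0 <= B' * (ell th (S (J + d)) i - rho * ell th (J + d) i)) by (apply Rmult_le_pos; lra).
        assert (T2 : B' * rho * ell th (J + d) i = (B' + (c1 + del)) * ell th (J + d) i) by (rewrite EB; auto).
        nra.
      + rewrite S_INR. specialize (Hepos J). assert (0 <= INR d) by apply pos_INR.
        assert (U1 : 0 <= INR d * (rho - 1) * ell th J i) by (apply Rmult_le_pos; [apply Rmult_le_pos|]; lra).
        assert (U2 : 0 <= (rho - 1) * (ell th (J + d) i - ell th J i)) by (apply Rmult_le_pos; lra).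
        nra. }
  set (YJ := Yv n th J i).
  destruct (INR_archimed ((rho - 1) * ell th J i) (Rabs YJ / del)) as [d0 Hd0].
  { specialize (Hepos J). apply Rmult_lt_0_compat; lra. }
  exists (J + d0)%nat. intros m Hm. replace m with (J + (m - J))%nat by lia.
  set (d := (m - J)%nat). destruct (Claim d) as [C1 C2].
  assert (Hdd : INR d0 <= INR d) by (apply le_INR; unfold d; lia).
  set (e := ell th (J + d) i). fold e in C1, C2. assert (He : 0 < e) by apply Hepos.
  assert (Hlarge : Rabs YJ / del < e).
  { specialize (Hepos J). assert (0 <= rho - 1) by lra.
    assert (U : 0 <= (INR d - INR d0) * ((rho - 1) * ell th J i)) by (apply Rmult_le_pos; [lra|apply Rmult_le_pos; lra]).
    nra. }
  assert (HY : YJ / e <= del).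
  { apply Rle_trans with (Rabs YJ / e). unfold Rdiv. apply Rmult_le_compat_r. left; apply Rinv_0_lt_compat; auto. apply Rle_abs.
    apply Rmult_le_reg_r with e; auto. unfold Rdiv. rewrite Rmult_assoc, Rinv_l, Rmult_1_r by lra.
    apply Rmult_lt_compat_r with (r := del) in Hlarge; auto. unfold Rdiv in Hlarge.
    rewrite Rmult_assoc, Rinv_l, Rmult_1_r in Hlarge by lra. lra. }
  unfold useq. fold e.
  assert (Hq : q th (J + d) i <= Yv n th (J + d) i) by (apply q_le_Y; auto).
  assert (q th (J + d) i / e <= YJ / e + B').
  { apply Rmult_le_reg_r with e; auto. unfold Rdiv. replace (q th (J + d) i * / e * e) with (q th (J + d) i) by (field; lra). replace ((YJ * / e + B') * e) with (YJ + B' * e) by (field; lra). unfold YJ; lra. }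
  assert (B' = (c1 + del) / (lam - 1 - del)) by (unfold B', rho; f_equal; ring).
  unfold qR. fold (Rdot n Rv (q th 1)). fold c1. unfold Rdiv in Hdel3. rewrite Rmult_comm. lra.
Qed.

Lemma ident_conv n th lam Rv i : Hyp n th lam Rv -> identical_set_cond n th -> (i < n)%nat ->
  forall eps, 0 < eps -> exists N, forall m, (N <= m)%nat ->
  Rabs (useq th i m - / lam * qR n th Rv 1) < eps.
Proof.
  intros HH ID Hi eps Heps. pose proof HH as [V [SC [PR PFr]]].
  assert (Hlam : 1 <= lam) by (eapply lam_ge1; eauto).
  assert (Hq : forall j k, (k < n)%nat -> q th (j + 1) k = P n th j (q th 1) k).
  { induction j; intros k Hk. reflexivity.
    simpl plus. rewrite (qS_ident n th (j + 1) k) by (auto; lia). rewrite P_S.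
    apply Av_ext. intros; auto. }
  destruct (ratio_conv n th lam Rv (q th 1) (ell th 1) V PR PFr) with (i := i) (eps := eps) as [N0 HN0]; auto.
  intros; apply ell_pos with n; auto.
  exists (N0 + 1)%nat. intros m Hm. specialize (HN0 (m - 1)%nat ltac:(lia)).
  rewrite (Rdot_ell n th lam Rv 1) in HN0 by auto.
  unfold useq. replace m with ((m - 1) + 1)%nat by lia.
  rewrite Hq, (ell_shift n th 1 (m - 1) i) by auto.
  replace (/ lam * qR n th Rv 1) with (Rdot n Rv (q th 1) / lam ^ 1). auto.
  unfold qR, Rdot. simpl. field. lra.
Qed.

Lemma Z_disj n th lam Rv r : Hyp n th lam Rv -> disjoint_set_cond n th ->
  Rdot n Rv (q th (S r)) = Rdot n Rv (q th 1) + lam * Rdot n Rv (q th r).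
Proof.
  intros HH DJ. pose proof HH as [V [SC [PR PFr]]].
  rewrite (Rdot_ext n Rv _ (fun i => 1 * q th 1 i + 1 * Av n th (q th r) i)).
  rewrite Rdot_lin, (Rdot_Av n th lam Rv) by auto. ring.
  intros i Hi. rewrite (qS_disj n th r i) by auto. ring.
Qed.

Lemma Z_closed n th lam Rv r : Hyp n th lam Rv -> disjoint_set_cond n th ->
  Rdot n Rv (q th r) * (lam - 1) = Rdot n Rv (q th 1) * (lam ^ r - 1).
Proof.
  intros HH DJ. induction r.
  - unfold Rdot. rewrite (rsum_ext _ _ (fun _ => 0)). rewrite rsum_zero. simpl; ring.
    intros; rewrite q_0; ring.
  - rewrite (Z_disj n th lam Rv r) by auto. rewrite Rmult_plus_distr_r, Rmult_assoc, IHr. simpl. ring.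
Qed.

Lemma disj_lower n th lam Rv : Hyp n th lam Rv -> disjoint_set_cond n th -> 1 < lam ->
  forall eps, 0 < eps -> exists r, (1 <= r)%nat /\ / (lam - 1) * qR n th Rv 1 - eps <= / lam ^ r * qR n th Rv r.
Proof.
  intros HH DJ Hlam eps Heps.
  set (c1 := qR n th Rv 1).
  assert (Hc1 : 0 <= c1) by (exact (Rdot_nonneg n th lam Rv 1 HH)).
  destruct (INR_archimed (eps * ((lam - 1) * (lam - 1))) c1) as [r Hr].
  { apply Rmult_lt_0_compat; auto. nra. }
  exists (S r). split. lia.
  pose proof (Z_closed n th lam Rv (S r) HH DJ) as E. change (Rdot n Rv (q th (S r))) with (qR n th Rv (S r)) in E. change (Rdot n Rv (q th 1)) with c1 in E.
  set (L := lam ^ S r) in *.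
  assert (HL : 1 + INR (S r) * (lam - 1) <= L).
  { unfold L. replace lam with (1 + (lam - 1)) at 2 by ring. apply bernoulli. lra. }
  rewrite S_INR in HL. assert (0 <= INR r) by apply pos_INR.
  assert (HLp : 0 < L) by nra.
  assert (Z : qR n th Rv (S r) = c1 * (L - 1) / (lam - 1)).
  { apply Rmult_eq_reg_r with (lam - 1). rewrite E. field. lra. lra. }
  rewrite Z.
  assert (G : c1 <= eps * (lam - 1) * L).
  { assert (eps * ((lam - 1) * (lam - 1)) * INR r <= eps * (lam - 1) * L).
    { assert (INR r * (lam - 1) <= L) by nra.
      replace (eps * ((lam - 1) * (lam - 1)) * INR r) with (eps * (lam - 1) * (INR r * (lam - 1))) by ring.
      apply Rmult_le_compat_l. apply Rmult_le_pos; lra. auto. }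
    lra. }
  replace (/ L * (c1 * (L - 1) / (lam - 1))) with (/ (lam - 1) * c1 - c1 / ((lam - 1) * L)) by (field; lra).
  assert (c1 / ((lam - 1) * L) <= eps).
  { apply Rmult_le_reg_r with ((lam - 1) * L). nra. unfold Rdiv. rewrite Rmult_assoc, Rinv_l by nra. lra. }
  lra.
Qed.

Lemma lam_gt1 n th lam Rv i0 : Hyp n th lam Rv -> (i0 < n)%nat -> 0 < q th 1 i0 -> 1 < lam.
Proof.
  intros HH Hi0 Hq. pose proof HH as [V [SC [PR PFr]]]. pose proof PFr as [HR [HS PF]].
  assert (Hc : (2 <= card_pow th 1 i0)%nat).
  { pose proof (card_pow_pos n th 1 i0 V Hi0). destruct (Nat.eq_dec (card_pow th 1 i0) 1).
    unfold q in Hq. rewrite e in Hq. simpl in Hq. rewrite ln_1 in Hq. lra. lia. }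
  rewrite card_one in Hc.
  assert (ND := NoDup_nodup wdec (th i0)).
  destruct (nodup wdec (th i0)) as [|u [|v l]] eqn:E; simpl in Hc; try lia.
  assert (Hu : In u (th i0)) by (apply (nodup_In wdec); rewrite E; left; auto).
  assert (Hv : In v (th i0)) by (apply (nodup_In wdec); rewrite E; right; left; auto).
  assert (Huv : u <> v) by (intro; subst; inversion ND; subst; apply H1; left; auto).
  destruct (V i0 Hi0) as [Hne Hth]. destruct (Hth u Hu) as [Hun Ou]. destruct (Hth v Hv) as [Hvn Ov].
  assert (Hocc : forall b, (b < n)%nat -> occ u b = occ v b) by (intros; apply (SC i0); auto).
  assert (Hlen : INR (length u) = INR (length v)).
  { rewrite !(len_occ n) by auto. apply rsum_ext. intros; rewrite Hocc; auto. }
  apply INR_eq in Hlen.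
  assert (H2 : (2 <= length u)%nat).
  { destruct u as [|b [|b' u']]. congruence. 2: simpl; lia.
    destruct v as [|c [|c' v']]; simpl in Hlen; try lia.
    assert (Hb : (b < n)%nat) by (apply Ou; left; auto).
    specialize (Hocc b Hb). unfold occ in Hocc. simpl in Hocc.
    destruct (Nat.eq_dec b b); [|congruence]. destruct (Nat.eq_dec c b). subst. congruence. lia. }
  assert (A0 : Av n th (fun _ => 1) i0 = INR (length u)).
  { rewrite <- (lsum_th n th i0 u) by auto. apply lsum_len. }
  assert (A1 : forall i, (i < n)%nat -> 1 <= Av n th (fun _ => 1) i).
  { intros i Hi. destruct (V i Hi) as [Hne' Hth']. pose proof (hd_In [] _ Hne') as Hh.
    rewrite <- (lsum_th n th i (hd [] (th i))) by auto. rewrite lsum_len.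
    destruct (Hth' _ Hh) as [Hhn _]. destruct (hd [] (th i)). congruence. simpl length. rewrite S_INR.
    pose proof (pos_INR (length l0)). lra. }
  assert (E1 : Rdot n Rv (Av n th (fun _ => 1)) = lam * Rdot n Rv (fun _ => 1)) by (apply Rdot_Av; auto).
  assert (E2 : Rdot n Rv (fun _ => 1) = 1) by (unfold Rdot; rewrite (rsum_ext _ _ Rv) by (intros; ring); auto).
  assert (E3 : Rdot n Rv (fun i => 1 * 1 + 1 * (if Nat.eq_dec i0 i then 1 else 0)) = 1 + Rv i0).
  { rewrite Rdot_lin, E2. unfold Rdot. rewrite rsum_ind; auto. ring. }
  assert (Rdot n Rv (fun i => 1 * 1 + 1 * (if Nat.eq_dec i0 i then 1 else 0)) <= Rdot n Rv (Av n th (fun _ => 1))).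
  { apply Rdot_le; auto. intros i Hi. destruct (Nat.eq_dec i0 i).
    subst. rewrite A0. apply le_INR in H2. simpl in H2. lra. specialize (A1 i Hi). lra. }
  rewrite E3, E1, E2 in H. specialize (HR i0 Hi0). lra.
Qed.

Lemma degenerate n th lam Rv : Hyp n th lam Rv -> (forall i, (i < n)%nat -> q th 1 i = 0) ->
  forall m i, (i < n)%nat -> q th m i = 0.
Proof.
  intros HH H0 m. pose proof HH as [V [SC [PR PFr]]]. induction m; intros i Hi. apply q_0.
  pose proof (qS_bounds n th m i V SC Hi) as [B1 B2].
  rewrite (Av_ext n th _ (fun _ => 0)), Av_zero in B1, B2 by auto. rewrite H0 in B2 by auto. lra.
Qed.

Theorem mainTheorem3 (n : nat) (th : rsubst) (lam : R) (Rv : nat -> R) :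
  valid_rsubst n th ->
  semi_compatible n th ->
  primitive_mat n (subst_mat th) ->
  PF_right n (subst_mat th) lam Rv ->
  (forall i, (i < n)%nat ->
     exists sl su,
       is_liminf (fun m => q th m i / ell th m i) sl /\
       is_limsup (fun m => q th m i / ell th m i) su /\
       / lam * qR n th Rv 1 <= sl /\ sl <= su /\
       su <= / (lam - 1) * qR n th Rv 1 /\
       (identical_set_cond n th -> sl = / lam * qR n th Rv 1) /\
       (disjoint_set_cond n th -> su = / (lam - 1) * qR n th Rv 1) /\
       (forall r, (1 <= r)%nat -> / lam ^ r * qR n th Rv r <= sl)) /\
  (forall r, (1 <= r)%nat ->
     / lam ^ r * qR n th Rv r <= / lam ^ (S r) * qR n th Rv (S r)).
Proof.
  intros V SC PR PFr.
  assert (HH : Hyp n th lam Rv) by exact (conj V (conj SC (conj PR PFr))).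
  assert (Hlam : 1 <= lam) by (eapply lam_ge1; eauto).
  pose proof PFr as [HR [HS PF]].
  split.
  2:{ intros r _. change (qR n th Rv r) with (Rdot n Rv (q th r)).
      change (qR n th Rv (S r)) with (Rdot n Rv (q th (S r))).
      assert (H1 : Rdot n Rv (Av n th (q th r)) <= Rdot n Rv (q th (S r))).
      { apply Rdot_le; auto. intros i Hi. apply qS_bounds; auto. }
      rewrite (Rdot_Av n th lam Rv) in H1 by auto.
      assert (Hp : 0 < lam ^ r) by (apply pow_lt; lra).
      replace (/ lam ^ r * Rdot n Rv (q th r)) with (/ lam ^ S r * (lam * Rdot n Rv (q th r))).
      apply Rmult_le_compat_l; auto. left; apply Rinv_0_lt_compat. apply pow_lt; lra.
      simpl. field. lra. }
  intros i Hi.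
  change (fun m => q th m i / ell th m i) with (useq th i).
  destruct (classic (forall j, (j < n)%nat -> q th 1 j = 0)) as [Hdeg|Hndeg].
  -
    assert (Hz : forall m, useq th i m = 0).
    { intro m. unfold useq. rewrite (degenerate n th lam Rv HH Hdeg m i Hi). unfold Rdiv; ring. }
    assert (Hq : forall r, qR n th Rv r = 0).
    { intro r. unfold qR. rewrite (rsum_ext _ _ (fun _ => 0)). apply rsum_zero.
      intros j Hj. rewrite (degenerate n th lam Rv HH Hdeg r j Hj). ring. }
    exists 0, 0. rewrite !Hq. repeat split; try (intros; ring); try lra.
    + exists 0%nat. intros m _. rewrite Hz. lra.
    + intro N. exists N. split; auto. rewrite Hz. lra.
    + exists 0%nat. intros m _. rewrite Hz. lra.
    + intro N. exists N. split; auto. rewrite Hz. lra.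
    + intros; rewrite Hq; lra.
  -
    assert (Hgt : 1 < lam).
    { apply not_all_ex_not in Hndeg. destruct Hndeg as [i0 Hi0].
      apply imply_to_and in Hi0. destruct Hi0 as [Hi0 Hq0].
      apply (lam_gt1 n th lam Rv i0 HH Hi0).
      pose proof (q_nonneg n th 1 i0 V Hi0). lra. }
    destruct (liminf_exists (useq th i) 0 (/ (lam - 1) * qR n th Rv 1 + 1)) as [sl Hsl].
    { intro m. apply useq_nonneg with n; auto. }
    { apply (upper_bound n th lam Rv i HH Hgt Hi 1). lra. }
    destruct (limsup_exists (useq th i) 0 (/ (lam - 1) * qR n th Rv 1 + 1)) as [su Hsu].
    { intro m. apply useq_nonneg with n; auto. }
    { apply (upper_bound n th lam Rv i HH Hgt Hi 1). lra. }
    assert (Hlow : forall r, / lam ^ r * qR n th Rv r <= sl).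
    { intro r. apply (liminf_ge (useq th i)); auto. intros eps Heps.
      apply (lower_bound n th lam Rv i r HH Hi eps Heps). }
    assert (Hup : su <= / (lam - 1) * qR n th Rv 1).
    { apply (limsup_le (useq th i)); auto. intros eps Heps.
      apply (upper_bound n th lam Rv i HH Hgt Hi eps Heps). }
    assert (Hle : sl <= su) by (apply (liminf_le_limsup (useq th i)); auto).
    exists sl, su. split; [auto|]. split; [auto|]. split.
    { specialize (Hlow 1%nat). simpl pow in Hlow. rewrite Rmult_1_r in Hlow. auto. }
    split; [auto|]. split; [auto|]. split.
    { intro ID. apply (liminf_conv (useq th i)); auto. intros eps Heps.
      apply (ident_conv n th lam Rv i HH ID Hi eps Heps). }
    split.
    { intro DJ. apply Rle_antisym; auto. apply Rle_trans with sl; auto.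
      apply le_eps. intros eps Heps. destruct (disj_lower n th lam Rv HH DJ Hgt eps Heps) as [r [_ Hr]].
      specialize (Hlow r). lra. }
    intros r _. auto.
Qed.
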